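(* Let $\{X_k\}_{k=0}^{N-1}$ be square random matrices and $\{y_k\}_{k=0}^{N-1}$ random vectors of compatible dimension, both with bounded second moments, and let $\{F_k\}_{k=0}^{N-1}$ be deterministic matrices of compatible dimensions. Suppose that $(X_k,y_k)$ may be dependent, but $X_k$ and $X_l$ are independent for $k\neq l$. Then $$\mathbb E\Big[\Big\|\sum_{k=0}^{N-1}F_kX_ky_k\Big\|^2\Big]\le\sum_{k=0}^{N-1}\|F_k\|^2\sqrt{\mathbb E[\|X_k\|^4]}\;\sqrt{\mathbb E\Big[\Big(\sum_{k=0}^{N-1}\|y_k\|^2\Big)^2\Big]}.$$
   Context: $\|\cdot\|$ denotes the Euclidean norm for vectors and the spectral norm for matrices. *)

(* Defs.v *)
From HB Require Import structures.
From mathcomp Require Import all_boot all_order all_algebra.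
From mathcomp Require Import all_classical all_reals all_analysis.
Set Implicit Arguments. Unset Strict Implicit. Unset Printing Implicit Defensive.
Import Order.TTheory GRing.Theory Num.Theory.
Local Open Scope classical_set_scope.
Local Open Scope ring_scope.

Definition vnorm {R : realType} {n : nat} (v : 'cV[R]_n) : R :=
  Num.sqrt (\sum_(i < n) v i 0 ^+ 2).

Definition spec_norm {R : realType} {m n : nat} (A : 'M[R]_(m, n)) : R :=
  sup [set vnorm (A *m v) | v in [set v : 'cV[R]_n | vnorm v <= 1]].

Definition mx_events {d} {T : measurableType d} {R : realType} {m n : nat}
  (X : T -> 'M[R]_(m, n)) : set (set T) :=
  [set A | exists (i : 'I_m) (j : 'I_n) (B : set R),
      measurable B /\ A = (fun w => X w i j) @^-1` B].

Definition sigma_mx {d} {T : measurableType d} {R : realType} {m n : nat}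
  (X : T -> 'M[R]_(m, n)) : set (set T) := <<s mx_events X >>.

Definition indep_mx {d} {T : measurableType d} {R : realType}
  (P : probability T R) {m1 n1 m2 n2 : nat}
  (X : T -> 'M[R]_(m1, n1)) (Y : T -> 'M[R]_(m2, n2)) : Prop :=
  forall A B, sigma_mx X A -> sigma_mx Y B -> P (A `&` B) = (P A * P B)%E.

(* Main.v *)
Require Import Defs.
From HB Require Import structures.
From mathcomp Require Import all_boot all_order all_algebra.
From mathcomp Require Import all_classical all_reals all_analysis.
From mathcomp Require Import measurable_realfun.
From mathcomp Require Import ring lra.
Set Implicit Arguments. Unset Strict Implicit. Unset Printing Implicit Defensive.
Import Order.TTheory GRing.Theory Num.Theory.
Import numFieldNormedType.Exports.
Local Open Scope classical_set_scope.
Local Open Scope ring_scope.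

Section LA.
Variable R : realType.

Lemma CS2 (I : finType) (a b : I -> R) :
  (\sum_i a i * b i) ^+ 2 <= (\sum_i a i ^+ 2) * (\sum_i b i ^+ 2).
Proof.
set A := \sum_i a i ^+ 2; set B := \sum_i b i ^+ 2; set C := \sum_i a i * b i.
have A0 : 0 <= A by apply: sumr_ge0 => i _; exact: sqr_ge0.
have B0 : 0 <= B by apply: sumr_ge0 => i _; exact: sqr_ge0.
have [Az|Ap] := eqVneq A 0.
  have ai : forall i, a i = 0.
    move=> i; apply/eqP; rewrite -sqrf_eq0; apply/eqP.
    by apply: (psumr_eq0P _ Az) => // j _; exact: sqr_ge0.
  have -> : C = 0 by rewrite /C big1 // => i _; rewrite ai mul0r.
  by rewrite expr0n /= mulr_ge0.
have E : forall t, \sum_i (a i * t - b i) ^+ 2 = t ^+ 2 * A - (t * 2) * C + B.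
  move=> t; rewrite /A /B /C mulr_sumr mulr_sumr -sumrB -big_split /=.
  by apply: eq_bigr => i _; ring.
have := E (C / A); rewrite -/A => E'.
have H : 0 <= \sum_i (a i * (C / A) - b i) ^+ 2 by apply: sumr_ge0 => i _; exact: sqr_ge0.
rewrite E' in H.
have Apos : 0 < A by rewrite lt_def Ap A0.
have : 0 <= A * ((C / A) ^+ 2 * A - C / A * 2 * C + B) by rewrite mulr_ge0.
have -> : A * ((C / A) ^+ 2 * A - C / A * 2 * C + B) = A * B - C ^+ 2 by field.
by rewrite subr_ge0.
Qed.


Lemma CS (I : finType) (a b : I -> R) :
  \sum_i a i * b i <= Num.sqrt (\sum_i a i ^+ 2) * Num.sqrt (\sum_i b i ^+ 2).
Proof.
have A0 : 0 <= \sum_i a i ^+ 2 by apply: sumr_ge0 => i _; exact: sqr_ge0.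
rewrite -sqrtrM //; apply: le_trans (ler_norm _) _.
by rewrite -sqrtr_sqr ler_sqrt ?CS2 // mulr_ge0 // sumr_ge0 // => i _; exact: sqr_ge0.
Qed.

Lemma vnorm_ge0 n (v : 'cV[R]_n) : 0 <= vnorm v.
Proof. exact: sqrtr_ge0. Qed.

Lemma vnorm_sq n (v : 'cV[R]_n) : vnorm v ^+ 2 = \sum_i v i 0 ^+ 2.
Proof. by rewrite sqr_sqrtr // sumr_ge0 // => i _; exact: sqr_ge0. Qed.

Lemma vnormD n (u v : 'cV[R]_n) : vnorm (u + v) <= vnorm u + vnorm v.
Proof.
rewrite {1}/vnorm -(ger0_norm (addr_ge0 (vnorm_ge0 u) (vnorm_ge0 v))) -sqrtr_sqr.
rewrite ler_sqrt ?sqr_ge0 //.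
have -> : \sum_i (u + v) i 0 ^+ 2 = \sum_i u i 0 ^+ 2 + 2 * \sum_i u i 0 * v i 0 + \sum_i v i 0 ^+ 2.
  rewrite mulr_sumr -!big_split /=; apply: eq_bigr => i _; rewrite mxE; ring.
rewrite sqrrD -!vnorm_sq lerD2r lerD2l -mulr_natl.
have h := CS (fun i => u i 0) (fun i => v i 0).
move: h; rewrite /vnorm; lra.
Qed.

Lemma vnorm0 n : vnorm (0 : 'cV[R]_n) = 0.
Proof. by rewrite /vnorm big1 ?sqrtr0 // => i _; rewrite mxE expr0n. Qed.

Lemma vnorm_sum (I : finType) n (z : I -> 'cV[R]_n) :
  vnorm (\sum_i z i) <= \sum_i vnorm (z i).
Proof.
apply: (big_ind2 (fun x y => vnorm x <= y)); first by rewrite vnorm0.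
  by move=> x1 x2 y1 y2 h1 h2; apply: le_trans (vnormD _ _) _; exact: lerD.
by [].
Qed.

Lemma vnormZ n c (v : 'cV[R]_n) : vnorm (c *: v) = `|c| * vnorm v.
Proof.
rewrite /vnorm -sqrtr_sqr -sqrtrM ?sqr_ge0 // mulr_sumr; congr Num.sqrt.
by apply: eq_bigr => i _; rewrite mxE exprMn.
Qed.

Lemma vnorm_entry n (v : 'cV[R]_n) i : `|v i 0| <= vnorm v.
Proof.
rewrite -sqrtr_sqr ler_sqrt; last by apply: sumr_ge0 => j _; exact: sqr_ge0.
rewrite (bigD1 i) //= lerDl; apply: sumr_ge0 => j _; exact: sqr_ge0.
Qed.

Definition frob m n (A : 'M[R]_(m, n)) := Num.sqrt (\sum_i \sum_j A i j ^+ 2).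

Lemma frob_ge0 m n (A : 'M[R]_(m, n)) : 0 <= frob A.
Proof. exact: sqrtr_ge0. Qed.

Lemma vnorm_frob m n (A : 'M[R]_(m, n)) (u : 'cV[R]_n) :
  vnorm (A *m u) <= frob A * vnorm u.
Proof.
rewrite /vnorm /frob -sqrtrM; last by apply: sumr_ge0 => i _; apply: sumr_ge0 => j _; exact: sqr_ge0.
rewrite ler_sqrt; last by apply: mulr_ge0; apply: sumr_ge0 => i _; try apply: sumr_ge0 => j _; exact: sqr_ge0.
rewrite mulr_suml; apply: ler_sum => i _; rewrite mxE; exact: CS2.
Qed.


Section Spec.
Variables m n : nat.
Implicit Types A : 'M[R]_(m, n).

Lemma spec_hub A : has_ubound [set vnorm (A *m v) | v in [set v : 'cV[R]_n | vnorm v <= 1]].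
Proof.
exists (frob A) => _ [v hv <-]; apply: le_trans (vnorm_frob A v) _.
by rewrite -{2}(mulr1 (frob A)) ler_wpM2l // frob_ge0.
Qed.

Lemma spec_in A v : vnorm v <= 1 -> vnorm (A *m v) <= spec_norm A.
Proof. by move=> hv; apply: (ub_le_sup (spec_hub A)); exists v. Qed.

Lemma spec_ge0 A : 0 <= spec_norm A.
Proof.
have h := @spec_in A 0; rewrite mulmx0 !vnorm0 in h; apply: h; exact: ler01.
Qed.

Lemma spec_le A c : (forall v : 'cV[R]_n, vnorm v <= 1 -> vnorm (A *m v) <= c) ->
  spec_norm A <= c.
Proof.
move=> h; apply: ge_sup; first by exists (vnorm (A *m 0)), 0 => //=; rewrite vnorm0 ler01.
by move=> _ [v hv <-]; exact: h.
Qed.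

Lemma spec_mul A u : vnorm (A *m u) <= spec_norm A * vnorm u.
Proof.
have [u0|u0] := eqVneq (vnorm u) 0.
  by apply: le_trans (vnorm_frob A u) _; rewrite u0 !mulr0.
have up : 0 < vnorm u by rewrite lt_def u0 vnorm_ge0.
set v := (vnorm u)^-1 *: u.
have hv : vnorm v = 1 by rewrite /v vnormZ ger0_norm ?invr_ge0 ?vnorm_ge0 // mulVf.
have -> : vnorm (A *m u) = vnorm u * vnorm (A *m v).
  by rewrite /v -scalemxAr vnormZ ger0_norm ?invr_ge0 ?vnorm_ge0 // mulrA divff // mul1r.
by rewrite mulrC ler_pM2r // spec_in // hv.
Qed.

End Spec.


Lemma bigmax_le (I : Type) (r : seq I) (P : pred I) (F : I -> R) c :
  0 <= c -> (forall i, P i -> F i <= c) -> \big[Num.max/0]_(i <- r | P i) F i <= c.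
Proof.
move=> c0 h; apply: (big_ind (fun x => x <= c)) => //.
by move=> x y hx hy; rewrite ge_max hx hy.
Qed.

Lemma le_bigmax (I : eqType) (r : seq I) (P : pred I) (F : I -> R) j :
  j \in r -> P j -> F j <= \big[Num.max/0]_(i <- r | P i) F i.
Proof.
elim: r => [//|i r IH]; rewrite inE => /orP [/eqP -> | jr] Pj; rewrite big_cons.
  by rewrite Pj le_max lexx.
case: (P i); last exact: IH.
by rewrite le_max IH ?orbT.
Qed.

Lemma round_facts (x M : R) (k : nat) : 0 < M -> k%:R <= M * `|x| < k.+1%:R ->
  ((-1) ^+ (x < 0)%R * k%:R / M) ^+ 2 <= x ^+ 2 /\
  (x - (-1) ^+ (x < 0)%R * k%:R / M) ^+ 2 <= M^-1 ^+ 2.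
Proof.
move=> M0 /andP [h1 h2].
set s := (-1) ^+ (x < 0)%R : R.
have s2 : s ^+ 2 = 1 by rewrite sqrr_sign.
have xe : x = s * `|x| by rewrite /s -numEsign.
set a := `|x|; set t := k%:R / M.
have t0 : 0 <= t by rewrite /t divr_ge0 // ltW.
have ta : t <= a by rewrite /t ler_pdivrMr // mulrC.
have at' : a - t <= M^-1.
  have -> : a - t = (M * a - k%:R) * M^-1 by rewrite /t; field; rewrite gt_eqF.
  rewrite -[leRHS](mul1r M^-1); apply: ler_wpM2r; first by rewrite invr_ge0 ltW.
  by move: h2; rewrite -addn1 natrD /a; lra.
have a0 : 0 <= a by rewrite normr_ge0.
split.
  rewrite -mulrA exprMn s2 mul1r -/t.
  rewrite xe [(s * _) ^+ 2]exprMn s2 mul1r -/a.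
  by rewrite ler_sqr // ?nnegrE.
rewrite {1}xe -mulrA -/t -mulrBr [(s * _) ^+ 2]exprMn s2 mul1r.
rewrite ler_sqr // ?nnegrE ?subr_ge0 ?invr_ge0 // ltW //.
Qed.

Section Grid.
Variables m n : nat.

Definition gv (N : nat) (f : {ffun 'I_n -> 'I_N.+2 * bool}) : 'cV[R]_n :=
  \col_i ((-1) ^+ (f i).2 * ((f i).1 : nat)%:R / N.+1%:R).

Definition gmax (N : nat) (A : 'M[R]_(m, n)) : R :=
  \big[Num.max/0]_(f : {ffun 'I_n -> 'I_N.+2 * bool} | vnorm (gv f) <= 1)
     vnorm (A *m gv f).

Lemma gmax_le N A : gmax N A <= spec_norm A.
Proof.
apply: bigmax_le; first exact: spec_ge0.
by move=> f hf; exact: spec_in.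
Qed.

Lemma gmax_ge N A : spec_norm A <= gmax N A + frob A * Num.sqrt n%:R / N.+1%:R.
Proof.
apply: spec_le => v hv.
set M : R := N.+1%:R.
have M0 : 0 < M by rewrite /M ltr0Sn.
have kb : forall i, (Num.truncn (M * `|v i 0|)%R < N.+2)%N.
  move=> i; rewrite truncn_lt_nat ?mulr_ge0 ?normr_ge0 ?ler0n //.
  apply: (@le_lt_trans _ _ M); last by rewrite /M ltr_nat.
  rewrite -[leRHS](mulr1 M) ler_pM2l //; apply: le_trans (vnorm_entry v i) hv.
pose f : {ffun 'I_n -> 'I_N.+2 * bool} := [ffun i => (Ordinal (kb i), v i 0 < 0)].
have hq : forall i, gv f i 0 = (-1) ^+ (v i 0 < 0)%R * (Num.truncn (M * `|v i 0|))%:R / M.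
  by move=> i; rewrite /gv mxE ffunE.
have rf : forall i, (gv f i 0) ^+ 2 <= v i 0 ^+ 2 /\ (v i 0 - gv f i 0) ^+ 2 <= M^-1 ^+ 2.
  move=> i; rewrite hq; apply: round_facts => //.
  by apply: truncn_itv; rewrite mulr_ge0 ?normr_ge0 // ltW.
have hq1 : vnorm (gv f) <= 1.
  apply: le_trans hv; rewrite /vnorm ler_sqrt; last by apply: sumr_ge0 => i _; exact: sqr_ge0.
  by apply: ler_sum => i _; case: (rf i).
have hd : vnorm (v - gv f) <= Num.sqrt n%:R * M^-1.
  have Mi0 : 0 <= M^-1 by rewrite invr_ge0 ltW.
  rewrite /vnorm -(ger0_norm Mi0) -sqrtr_sqr -sqrtrM ?ler0n //.
  rewrite ler_sqrt; last by rewrite mulr_ge0 ?ler0n ?sqr_ge0.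
  apply: le_trans (_ : \sum_(i < n) M^-1 ^+ 2 <= _).
    apply: ler_sum => i _.
    rewrite (_ : (v - gv f) i 0 = v i 0 - gv f i 0); last by rewrite !mxE.
    by case: (rf i) => _.
  by rewrite big_const_ord iter_addr_0 mulr_natl.
have -> : v = gv f + (v - gv f) by rewrite addrC subrK.
rewrite mulmxDr; apply: le_trans (vnormD _ _) _; apply: lerD.
  by apply: (@le_bigmax _ _ _ _ f) => //; rewrite mem_index_enum.
apply: le_trans (vnorm_frob _ _) _; rewrite -mulrA; apply: ler_wpM2l; first exact: frob_ge0.
exact: hd.
Qed.

End Grid.


Lemma gmax_cvg m n (A : 'M[R]_(m, n)) : (fun N => gmax N A) @ \oo --> spec_norm A.
Proof.
set c := frob A * Num.sqrt n%:R.
apply: (@squeeze_cvgr nat \oo _ R (fun N : nat => spec_norm A - c * harmonic N) (fun=> spec_norm A)).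
- apply: nearW => N /=; rewrite gmax_le andbT lerBlDr.
  by have := gmax_ge N A; rewrite -/c.
- rewrite -[X in _ --> X]subr0; apply: cvgB; first exact: cvg_cst.
  by rewrite -(mulr0 c); apply: cvgMl_tmp; exact: cvg_harmonic.
- exact: cvg_cst.
Qed.

Section Meas.
Context d (T : measurableType d).

Lemma meas_vnorm n (v : T -> 'cV[R]_n) :
  (forall i, measurable_fun setT (fun w => v w i 0)) ->
  measurable_fun setT (fun w => vnorm (v w)).
Proof.
move=> hv.
have -> : (fun w => vnorm (v w)) = (fun w => (\sum_i v w i 0 ^+ 2) `^ 2^-1).
  apply/funext => w; rewrite powR12_sqrt //; apply: sumr_ge0 => i _; exact: sqr_ge0.
change (measurable_fun setT ((@powR R ^~ 2^-1) \o (fun w => \sum_i v w i 0 ^+ 2))).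
apply: measurableT_comp; first exact: measurable_realfun.measurable_powR.
by apply: measurable_sum => i; apply: measurable_realfun.measurable_funX.
Qed.

Lemma meas_mul m n p (A : T -> 'M[R]_(m, n)) (B : T -> 'M[R]_(n, p)) :
  (forall i j, measurable_fun setT (fun w => A w i j)) ->
  (forall i j, measurable_fun setT (fun w => B w i j)) ->
  forall i j, measurable_fun setT (fun w => (A w *m B w) i j).
Proof.
move=> hA hB i j.
have -> : (fun w => (A w *m B w) i j) = (fun w => \sum_k A w i k * B w k j).
  by apply/funext => w; rewrite mxE.
by apply: measurable_sum => k; apply: measurable_funM.
Qed.

Lemma meas_bigmax (I : Type) (r : seq I) (P : pred I) (h : I -> T -> R) :
  (forall i, measurable_fun setT (h i)) ->
  measurable_fun setT (fun w => \big[Num.max/0]_(i <- r | P i) h i w).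
Proof.
move=> hh; elim: r => [|i r IH].
  by under eq_fun do rewrite big_nil; exact: measurable_cst.
under eq_fun do rewrite big_cons.
case: (P i) => //.
exact: measurable_maxr.
Qed.

Lemma meas_spec m n (A : T -> 'M[R]_(m, n)) :
  (forall i j, measurable_fun setT (fun w => A w i j)) ->
  measurable_fun setT (fun w => spec_norm (A w)).
Proof.
move=> hA.
apply: (@measurable_fun_cvg _ _ _ _ (fun N w => gmax N (A w))); last first.
  by move=> w _; exact: gmax_cvg.
move=> N; apply: meas_bigmax => f; apply: meas_vnorm => i.
apply: meas_mul => // i' j'; exact: measurable_cst.
Qed.


Lemma CS_int (mu : {measure set T -> \bar R}) (f g : T -> R) :
  measurable_fun setT f -> measurable_fun setT g ->
  (forall w, 0 <= f w) -> (forall w, 0 <= g w) ->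
  (\int[mu]_w (f w * g w)%:E <=
   poweR (\int[mu]_w (f w ^+ 2)%:E) (2^-1)%R * poweR (\int[mu]_w (g w ^+ 2)%:E) (2^-1)%R)%E.
Proof.
move=> mf mg f0 g0.
have h := hoelder mu mf mg (ltr0Sn _ 1) (ltr0Sn _ 1) (_ : 2^-1 + 2^-1 = 1).
have E2 : (2^-1 + 2^-1 = 1 :> R) by field.
move: (h E2); rewrite Lnorm1 !unlock /Lnorm.
have e1 : forall h : T -> R, (forall w, 0 <= h w) ->
   (\int[mu]_x (`|(EFin \o h) x| `^ 2) = \int[mu]_w (h w ^+ 2)%:E)%E.
  move=> h' h0; apply: eq_integral => w _ /=.
  by rewrite ger0_norm // powR_mulrn.
rewrite e1 // e1 //.
have -> : (\int[mu]_x `|(EFin \o (f \* g)%R) x| = \int[mu]_w ((f w * g w)%R)%:E)%E.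
  by apply: eq_integral => w _ /=; rewrite ger0_norm // mulr_ge0.
by [].
Qed.

End Meas.

Lemma pathwise N m (n : 'I_N -> nat) (F : forall k, 'M[R]_(m, n k))
  (Xw : forall k, 'M[R]_(n k)) (yw : forall k, 'cV[R]_(n k)) :
  vnorm (\sum_(k < N) F k *m Xw k *m yw k) ^+ 2 <=
  (\sum_(k < N) spec_norm (F k) ^+ 2 * spec_norm (Xw k) ^+ 2) *
  (\sum_(k < N) vnorm (yw k) ^+ 2).
Proof.
have h1 : vnorm (\sum_(k < N) F k *m Xw k *m yw k) <=
    \sum_(k < N) (spec_norm (F k) * spec_norm (Xw k)) * vnorm (yw k).
  apply: le_trans (vnorm_sum _) _; apply: ler_sum => k _.
  rewrite -mulmxA; apply: le_trans (spec_mul _ _) _; rewrite -mulrA.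
  exact: (ler_wpM2l (spec_ge0 _) (spec_mul _ _)).
have h2 := CS2 (fun k => spec_norm (F k) * spec_norm (Xw k)) (fun k => vnorm (yw k)).
apply: le_trans _ (le_trans h2 _); last first.
  by under eq_bigr do rewrite exprMn.
rewrite ler_sqr ?nnegrE ?vnorm_ge0 //.
by apply: sumr_ge0 => k _; rewrite !mulr_ge0 ?spec_ge0 ?vnorm_ge0.
Qed.

End LA.

Unset Implicit Arguments.

Theorem lemma4 (d : measure_display) (T : measurableType d) (R : realType)
  (P : probability T R) (N m : nat) (n : 'I_N -> nat)
  (X : forall k : 'I_N, T -> 'M[R]_(n k))
  (y : forall k : 'I_N, T -> 'cV[R]_(n k))
  (F : forall k : 'I_N, 'M[R]_(m, n k))
  (hXmeas : forall k i j, measurable_fun setT (fun w => X k w i j))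
  (hymeas : forall k i j, measurable_fun setT (fun w => y k w i j))
  (hX2 : forall k, (\int[P]_w ((spec_norm (X k w)) ^+ 2)%:E < +oo)%E)
  (hy2 : forall k, (\int[P]_w ((vnorm (y k w)) ^+ 2)%:E < +oo)%E)
  (hindep : forall k l : 'I_N, k != l -> indep_mx P (X k) (X l)) :
  (\int[P]_w ((vnorm (\sum_(k < N) F k *m X k w *m y k w)) ^+ 2)%:E
   <= (\sum_(k < N) ((spec_norm (F k)) ^+ 2)%:E
         * poweR (\int[P]_w ((spec_norm (X k w)) ^+ 4)%:E) 2^-1)
      * poweR (\int[P]_w ((\sum_(k < N) (vnorm (y k w)) ^+ 2) ^+ 2)%:E) 2^-1)%E.
Proof.
set sX := fun k w => spec_norm (X k w).
have msX : forall k, measurable_fun setT (sX k) by move=> k; exact: meas_spec.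
have mvy : forall k, measurable_fun setT (fun w => vnorm (y k w)).
  by move=> k; apply: meas_vnorm => i; exact: hymeas.
set Y := fun w => \sum_(k < N) vnorm (y k w) ^+ 2.
have mY : measurable_fun setT Y.
  by apply: measurable_sum => k; apply: measurable_funX.
have Y0 : forall w, 0 <= Y w by move=> w; apply: sumr_ge0 => k _; exact: sqr_ge0.
set fk := fun k => spec_norm (F k) ^+ 2.
have fk0 : forall k, 0 <= fk k by move=> k; exact: sqr_ge0.
have mZ : measurable_fun setT (fun w => vnorm (\sum_(k < N) F k *m X k w *m y k w) ^+ 2).
  apply: measurable_funX; apply: meas_vnorm => i.
  have -> : (fun w => (\sum_(k < N) F k *m X k w *m y k w) i 0) =
            (fun w => \sum_(k < N) (F k *m X k w *m y k w) i 0).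
    by apply/funext => w; rewrite summxE.
  apply: measurable_sum => k; apply: meas_mul => //.
  by apply: meas_mul => // i' j'; exact: measurable_cst.
apply: (@le_trans _ _ (\int[P]_w ((\sum_(k < N) fk k * sX k w ^+ 2) * Y w)%:E)%E).
  apply: ge0_le_integral => //.
  - by move=> w _; rewrite lee_fin sqr_ge0.
  - exact/measurable_EFinP.
  - apply/measurable_EFinP; apply: measurable_funM => //.
    by apply: measurable_sum => k; apply: measurable_funM => //; exact: measurable_funX.
  - by move=> w _; rewrite lee_fin; exact: pathwise.
have -> : (\int[P]_w ((\sum_(k < N) fk k * sX k w ^+ 2) * Y w)%:E =
    \sum_(k < N) (fk k)%:E * \int[P]_w ((sX k w ^+ 2 * Y w)%R)%:E)%E.
  transitivity (\int[P]_w (\sum_(k < N) (fk k)%:E * ((sX k w ^+ 2 * Y w)%R)%:E))%E.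
    apply: eq_integral => w _; rewrite mulr_suml -sumEFin; apply: eq_bigr => k _.
    by rewrite -mulrA EFinM.
  rewrite ge0_integral_sum //.
  - apply: eq_bigr => k _; rewrite ge0_integralZl_EFin //.
      by move=> w _; rewrite lee_fin mulr_ge0 ?sqr_ge0.
    apply/measurable_EFinP; apply: measurable_funM => //; exact: measurable_funX.
  - move=> k; apply/measurable_EFinP; apply: measurable_funM; first exact: measurable_cst.
    apply: measurable_funM => //; exact: measurable_funX.
  - by move=> k w _; apply: mule_ge0; rewrite lee_fin; [exact: fk0 | rewrite mulr_ge0 ?sqr_ge0 ?Y0].
rewrite ge0_sume_distrl; last first.
  by move=> k _; apply: mule_ge0; [rewrite lee_fin sqr_ge0 | exact: poweR_ge0].
apply: lee_sum => k _.
have hc := CS_int P (measurable_funX 2 (msX k)) mY (fun w => sqr_ge0 (sX k w)) Y0.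
have e4 : (\int[P]_w ((sX k w ^+ 2) ^+ 2)%:E = \int[P]_w (spec_norm (X k w) ^+ 4)%:E)%E.
  by apply: eq_integral => w _; rewrite -exprM.
rewrite e4 in hc.
rewrite -muleA; apply: (lee_wpmul2l _ hc); rewrite lee_fin; exact: fk0.
Qed.
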